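(* Let $X$ be a real Banach space and $T:X\rightrightarrows X^*$ a maximal monotone operator. If $D(T)$ is bounded, then $\mathrm{conv}\,R(T)$ is weak-$*$ dense in $X^*$.
   Context: An operator $T:X\rightrightarrows X^*$ is a subset of $X\times X^*$, with domain $D(T)=\{x\;|\;\exists x^*,(x,x^* )\in T\}$ and range $R(T)=\{x^*\;|\;\exists x,(x,x^* )\in T\}$. $T$ is monotone if $\langle x-y,x^*-y^*\rangle\geq0$ for all $(x,x^* ),(y,y^* )\in T$, and maximal monotone if it is monotone and not properly contained in another monotone operator. $\mathrm{conv}$ denotes convex hull. *)

(* Defs.v *)
From mathcomp Require Import all_boot all_order all_algebra.
From mathcomp Require Import all_classical all_reals all_analysis.
Set Implicit Arguments. Unset Strict Implicit. Unset Printing Implicit Defensive.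
Import Order.TTheory GRing.Theory Num.Theory.
Import numFieldNormedType.Exports.
Local Open Scope ring_scope.
Local Open Scope classical_set_scope.

Section MaxMono.
Variables (R : realType) (X : normedModType R).

(* X^* : the continuous linear functionals X -> R; the pairing <x, f> is f x. *)
Definition is_dual (f : X -> R) : Prop :=
  (forall (a : R) (x y : X), f (a *: x + y) = a * f x + f y) /\ continuous f.

(* An operator T : X ⇉ X^* is a subset of X × X^*. *)
Definition operator_in (T : set (X * (X -> R))) : Prop :=
  forall p, T p -> is_dual p.2.

Definition dom (T : set (X * (X -> R))) : set X := [set x | exists f, T (x, f)].
Definition ran (T : set (X * (X -> R))) : set (X -> R) := [set f | exists x, T (x, f)].

Definition monotone_op (T : set (X * (X -> R))) : Prop :=
  forall p q, T p -> T q -> 0 <= p.2 p.1 - p.2 q.1 - (q.2 p.1 - q.2 q.1).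

Definition maximal_monotone (T : set (X * (X -> R))) : Prop :=
  operator_in T /\ monotone_op T /\
  forall S : set (X * (X -> R)), operator_in S -> monotone_op S -> T `<=` S -> S = T.


Definition conv_hull (A : set (X -> R)) : set (X -> R) :=
  [set g | exists (n : nat) (w : 'I_n -> R) (f : 'I_n -> X -> R),
     (forall i, 0 <= w i) /\ \sum_(i < n) w i = 1 /\ (forall i, A (f i)) /\
     g = (fun x => \sum_(i < n) w i * f i x)].

(* weak-* density in X^*: every basic weak-* neighbourhood
   { h in X^* | |h x_j - g x_j| < eps, j < m } of every g in X^* meets A *)
Definition weak_star_dense (A : set (X -> R)) : Prop :=
  forall g : X -> R, is_dual g ->
  forall (m : nat) (xs : 'I_m -> X) (eps : R), 0 < eps ->
  exists h, A h /\ is_dual h /\ forall j, `|h (xs j) - g (xs j)| < eps.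

End MaxMono.

(* Main.v *)
Require Import Defs.
From mathcomp Require Import all_boot all_order all_algebra.
From mathcomp Require Import all_classical all_reals all_analysis.
From mathcomp Require Import ring lra.
Import Order.TTheory GRing.Theory Num.Theory.
Local Open Scope ring_scope.
Local Open Scope classical_set_scope.
Set Implicit Arguments. Unset Strict Implicit.

Lemma sum_Forall0 (R : realType) (A : Type) (P : A -> Prop) (s : seq A) (F : A -> R) :
  List.Forall P s -> (forall p, P p -> F p = 0) -> \sum_(p <- s) F p = 0.
Proof.
elim: s => [|p s IH] H HF; first by rewrite big_nil.
inversion H; subst. by rewrite big_cons HF // IH // add0r.
Qed.

Lemma sum_flatten2 (R : realType) (A B : Type) (s : seq B) (f1 f2 : B -> A) (G : A -> R) :
  \sum_(p <- flatten (map (fun q => [:: f1 q; f2 q]) s)) G p =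
  \sum_(q <- s) (G (f1 q) + G (f2 q)).
Proof.
elim: s => [|q s IH] /=; first by rewrite !big_nil.
by rewrite big_cons big_cons IH big_cons addrA.
Qed.

Lemma Forall_flatten2 (A B : Type) (P : A -> Prop) (Q : B -> Prop) (s : seq B) (f1 f2 : B -> A) :
  List.Forall Q s -> (forall q, Q q -> P (f1 q) /\ P (f2 q)) ->
  List.Forall P (flatten (map (fun q => [:: f1 q; f2 q]) s)).
Proof.
elim: s => [|q s IH] H HQ /=; first by constructor.
inversion H; subst. have [h1 h2] := HQ q H2.
constructor => //; constructor => //. exact: IH.
Qed.

Definition ext (R : realType) (m : nat) (v : 'I_m -> R) (c : R) (j : 'I_m.+1) : R :=
  oapp v c (unlift ord_max j).

Lemma ext_widen (R : realType) m (v : 'I_m -> R) c k :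
  ext v c (widen_ord (leqnSn m) k) = v k.
Proof.
rewrite /ext.
have -> : widen_ord (leqnSn m) k = lift ord_max k by apply: val_inj => /=; rewrite /bump leqNgt ltn_ord.
by rewrite liftK.
Qed.

Lemma ext_max (R : realType) m (v : 'I_m -> R) c : ext v c ord_max = c.
Proof. by rewrite /ext unlift_none. Qed.

Lemma ext_sum (R : realType) m (v : 'I_m -> R) c (u : 'I_m.+1 -> R) :
  \sum_j ext v c j * u j = \sum_(k < m) v k * u (widen_ord (leqnSn m) k) + c * u ord_max.
Proof.
rewrite big_ord_recr /= ext_max. congr (_ + _).
by apply: eq_bigr => k _; rewrite ext_widen.
Qed.

Lemma lin_sum (R : realType) m (v r1 r2 : 'I_m -> R) (al be : R) :
  \sum_k v k * (al * r1 k + be * r2 k) = al * \sum_k v k * r1 k + be * \sum_k v k * r2 k.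
Proof.
rewrite !mulr_sumr -big_split /=. apply: eq_bigr => k _. ring.
Qed.

Lemma pair_ineq (R : realType) (la lb x y : R) : 0 < la -> lb < 0 ->
  (- lb / (la - lb)) * x + (1 - (- lb / (la - lb))) * y <= 0 ->
  y / (- lb) <= - x / la.
Proof.
move=> ha hb H.
have hd : la - lb != 0 by apply/lt0r_neq0; lra.
have E : (- lb / (la - lb)) * x + (1 - (- lb / (la - lb))) * y = (- lb * x + la * y) / (la - lb).
  by field.
rewrite E in H.
have H2 : - lb * x + la * y <= 0.
  have := H; rewrite pmulr_lle0 //; rewrite invr_gt0; lra.
rewrite ler_pdivrMr; last lra.
rewrite mulrAC ler_pdivlMr //. nra.
Qed.
Lemma finB (R : realType) (m : nat) : forall (A : Type) (S : set A) (e : A -> 'I_m -> R),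
  (exists a, S a) ->
  (forall v : 'I_m -> R, (forall a, S a -> \sum_j v j * e a j <= 0) ->
      forall a, S a -> \sum_j v j * e a j = 0) ->
  exists s : seq (R * A), List.Forall (fun p => 0 <= p.1 /\ S p.2) s /\
    \sum_(p <- s) p.1 = 1 /\ forall j, \sum_(p <- s) p.1 * e p.2 j = 0.
Proof.
elim: m => [|m IH] A S e [a Sa] H.
  exists [:: (1, a)]; split; first by constructor => //; constructor.
  by split; [rewrite big_seq1 | case].
pose last a := e a ord_max.
pose rest a (k : 'I_m) := e a (widen_ord (leqnSn m) k).
have esum : forall v' c a, \sum_j ext v' c j * e a j = \sum_k v' k * rest a k + c * last a.
  by move=> v' c b; rewrite ext_sum.
have eqj : forall (G : 'I_m.+1 -> R) , (forall k, G (widen_ord (leqnSn m) k) = 0) -> G ord_max = 0 -> forall j, G j = 0.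
  move=> G h1 h2 j; case: (unliftP ord_max j) => [k ->|->] //.
  have -> : lift ord_max k = widen_ord (leqnSn m) k.
    by apply: val_inj => /=; rewrite /bump leqNgt ltn_ord.
  exact: h1.
case: (pselect (forall a, S a -> last a = 0)) => [H0|Hn].
  have HH : forall v' : 'I_m -> R, (forall b, S b -> \sum_k v' k * rest b k <= 0) ->
      forall b, S b -> \sum_k v' k * rest b k = 0.
    move=> v' Hv' b Sb.
    have := H (ext v' 0) _ b Sb; rewrite !esum mul0r !addr0; apply => c Sc.
    by rewrite esum mul0r addr0; apply: Hv'.
  have [s [Fs [s1 sj]]] := IH A S rest (ex_intro _ a Sa) HH.
  exists s; split => //; split => //.
  apply: (eqj (fun j => \sum_(p <- s) p.1 * e p.2 j)) => [k|]; first exact: sj.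
  apply: (sum_Forall0 Fs) => p [_ Sp]; by rewrite /= -/(last _) H0 ?mulr0.
case: (pselect (exists ap, S ap /\ 0 < last ap)) => [[ap [Sap hap]]|Hp]; last first.
  exfalso; apply: Hn => b Sb.
  have hh : forall c, S c -> \sum_j ext (fun _ : 'I_m => 0) 1 j * e c j <= 0.
    move=> c Sc; rewrite esum big1 ?add0r; last by move=> k _; rewrite mul0r.
    rewrite mul1r leNgt; apply/negP => hc; apply: Hp; by exists c; split.
  have := H _ hh b Sb; rewrite esum big1 ?add0r; last by move=> k _; rewrite mul0r.
  by rewrite mul1r.
case: (pselect (exists bn, S bn /\ last bn < 0)) => [[bn [Sbn hbn]]|Hm]; last first.
  exfalso; apply: Hn => b Sb.
  have hh : forall c, S c -> \sum_j ext (fun _ : 'I_m => 0) (-1) j * e c j <= 0.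
    move=> c Sc; rewrite esum big1 ?add0r; last by move=> k _; rewrite mul0r.
    rewrite mulN1r oppr_le0 leNgt; apply/negP => hc; apply: Hm; by exists c; split.
  have := H _ hh b Sb; rewrite esum big1 ?add0r; last by move=> k _; rewrite mul0r.
  by rewrite mulN1r => h; apply/eqP; rewrite -oppr_eq0 h.
pose al a b := if last a == 0 then 1 else - last b / (last a - last b).
pose S' (p : A * A) := S p.1 /\ S p.2 /\
   ((last p.1 = 0 /\ p.2 = p.1) \/ (0 < last p.1 /\ last p.2 < 0)).
pose e' (p : A * A) (k : 'I_m) := al p.1 p.2 * rest p.1 k + (1 - al p.1 p.2) * rest p.2 k.
have key : forall p, S' p -> [/\ 0 <= al p.1 p.2, 0 <= 1 - al p.1 p.2 &
    al p.1 p.2 * last p.1 + (1 - al p.1 p.2) * last p.2 = 0].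
  move=> [x y] [/= _ [_ [[hx ->]|[hx hy]]]].
    by rewrite /al hx eqxx subrr mul0r mulr0 add0r.
  have hx0 : last x == 0 = false by apply/negbTE; rewrite gt_eqF.
  rewrite /al hx0; have hd : last x - last y != 0 by apply/lt0r_neq0; lra.
  split.
  - apply: divr_ge0; lra.
  - have -> : 1 - - last y / (last x - last y) = last x / (last x - last y) by field.
    apply: divr_ge0; lra.
  - field => //.
have e'diag : forall u, e' (u, u) = rest u.
  by move=> u; apply: funext => k; rewrite /e' /=; ring.
have H' : forall v' : 'I_m -> R, (forall p, S' p -> \sum_k v' k * e' p k <= 0) ->
    forall p, S' p -> \sum_k v' k * e' p k = 0.
move=> v' Hv'.
pose dv x := \sum_k v' k * rest x k.
have pairb : forall x y, S x -> 0 < last x -> S y -> last y < 0 -> dv y / (- last y) <= - dv x / last x.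
  move=> x y Sx hx Sy hy; apply: pair_ineq => //.
  have := Hv' (x, y) (conj Sx (conj Sy (or_intror (conj hx hy)))).
  rewrite /e' /= lin_sum /al gt_eqF //.
pose E := [set dv y / (- last y) | y in [set y | S y /\ last y < 0]].
have hsup : has_sup E.
  split; first by exists (dv bn / (- last bn)); exists bn.
  exists (- dv ap / last ap) => z [y [Sy hy] <-]; exact: pairb.
pose lam := sup E.
have hle : forall u, S u -> dv u + lam * last u <= 0.
  move=> u Su; case: (ltgtP (last u) 0) => hu.
  - have : dv u / (- last u) <= lam by apply: sup_upper_bound => //; exists u.
    rewrite ler_pdivrMr; last lra. nra.
  - have : lam <= - dv u / last u by apply: ge_sup; [exists (dv bn / (- last bn)); exists bn|move=> z [y [Sy hy] <-]; exact: pairb].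
    rewrite ler_pdivlMr //. nra.
  - rewrite hu mulr0 addr0.
    have := Hv' (u, u) (conj Su (conj Su (or_introl (conj hu erefl)))).
    by rewrite e'diag.
have heq : forall u, S u -> dv u + lam * last u = 0.
  move=> u Su; rewrite -esum; apply: (H _ _ u Su) => c Sc; rewrite esum; exact: hle.
move=> [x y] Sp.
have [_ _ k3] := key _ Sp.
move: Sp => [/= Sx [Sy _]].
rewrite /e' /= lin_sum -/(dv x) -/(dv y).
have -> : dv x = - (lam * last x) by apply/eqP; rewrite -addr_eq0 heq.
have -> : dv y = - (lam * last y) by apply/eqP; rewrite -addr_eq0 heq.
move: k3 => /= k3.
have -> : al x y * - (lam * last x) + (1 - al x y) * - (lam * last y) = - lam * (al x y * last x + (1 - al x y) * last y) by ring.
by rewrite k3 mulr0.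
have [s [Fs [s1 sj]]] := IH (A * A)%type S' e' (ex_intro _ (ap, bn) (conj Sap (conj Sbn (or_intror (conj hap hbn))))) H'.
exists (flatten (map (fun q => [:: (q.1 * al q.2.1 q.2.2, q.2.1); (q.1 * (1 - al q.2.1 q.2.2), q.2.2)]) s)).
  split.
    apply: (Forall_flatten2 Fs) => -[w [x y]] /= [hw Sp]; have [k1 k2 _] := key _ Sp.
    move: Sp => [/= Sx [Sy _]]; split; split => //; exact: mulr_ge0.
  split.
    rewrite sum_flatten2 -[RHS]s1; apply: eq_bigr => q _ /=; ring.
  apply: eqj => [k|].
    rewrite sum_flatten2 -[RHS](sj k); apply: eq_bigr => q _ /=; rewrite /e' /rest; ring.
  rewrite sum_flatten2; apply: (sum_Forall0 Fs) => -[w [x y]] /= [_ Sp].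
  have [_ _ k3] := key _ Sp; move: k3 => /=; rewrite /last => k3.
  by rewrite -mulrA -mulrA -mulrDr k3 mulr0.
Qed.

Lemma dualD (R : realType) (X : normedModType R) (f : X -> R) : is_dual f ->
  forall x y, f (x + y) = f x + f y.
Proof. by move=> [h _] x y; have := h 1 x y; rewrite scale1r mul1r. Qed.

Lemma dual0 (R : realType) (X : normedModType R) (f : X -> R) : is_dual f -> f 0 = 0.
Proof.
move=> hf; have h := dualD hf 0 0; rewrite addr0 in h.
by apply: (addrI (f 0)); rewrite addr0 -h.
Qed.

Lemma dualZ (R : realType) (X : normedModType R) (f : X -> R) : is_dual f ->
  forall a x, f (a *: x) = a * f x.
Proof. by move=> hf a x; have := hf.1 a x 0; rewrite !addr0 dual0 // addr0. Qed.

Lemma dualB (R : realType) (X : normedModType R) (f : X -> R) : is_dual f ->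
  forall x y, f (x - y) = f x - f y.
Proof. by move=> hf x y; rewrite dualD // -scaleN1r dualZ // mulN1r. Qed.

Lemma dual_sum (R : realType) (X : normedModType R) (f : X -> R) : is_dual f ->
  forall m (v : 'I_m -> R) (xs : 'I_m -> X),
  f (\sum_(j < m) v j *: xs j) = \sum_(j < m) v j * f (xs j).
Proof.
move=> hf m v xs.
rewrite (big_morph f (dualD hf) (dual0 hf)).
by apply: eq_bigr => j _; rewrite dualZ.
Qed.

Lemma dual_bound (R : realType) (X : normedModType R) (f : X -> R) : is_dual f ->
  forall M : R, exists C, 0 <= C /\ forall x, `|x| <= M -> `|f x| <= C.
Proof.
move=> hf M.
have := hf.2 0; move/cvgr_dist_lt => /(_ 1 ltr01).
rewrite dual0 // => /nbhs_norm0P [d /= d0 hd].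
have hM1 : 0 < `|M| + 1 by rewrite ltr_pwDr // normr_ge0.
pose c := d / (2 * (`|M| + 1)).
have c0 : 0 < c by rewrite /c divr_gt0 // mulr_gt0.
exists (c^-1); split; first by rewrite invr_ge0 ltW.
move=> x hx.
have hcx : `|c *: x| < d.
  rewrite normrZ gtr0_norm //.
  have e : c * (`|M| + 1) = d / 2 by rewrite /c; field; rewrite gt_eqF.
  have : c * `|x| <= c * (`|M| + 1).
    apply: ler_wpM2l; first exact: ltW.
    have := ler_norm M; lra.
  rewrite e => h; apply: (le_lt_trans h); rewrite ltr_pdivrMr //; lra.
have := hd _ hcx; rewrite /= sub0r normrN dualZ // normrM gtr0_norm // => h.
rewrite -(ler_pM2l c0) mulrV ?unitfE ?gt_eqF //; exact: ltW.
Qed.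

Lemma zero_dual (R : realType) (X : normedModType R) : is_dual (fun _ : X => (0 : R)).
Proof. split; first by move=> *; rewrite mulr0 addr0. move=> x; exact: (@cvg_cst R^o (0:R) X (nbhs x) _). Qed.

Lemma T_nonempty (R : realType) (X : normedModType R) (T : set (X * (X -> R))) :
  maximal_monotone T -> exists p, T p.
Proof.
move=> [Hop [Hmon Hmax]].
case: (pselect (exists p, T p)) => // Hno; exfalso.
pose S := T `|` [set ((0 : X), (fun _ : X => (0 : R)))].
have hS : S = T.
  apply: Hmax.
  - move=> p [Tp|->]; [exact: Hop | exact: zero_dual].
  - move=> p q [Tp|->] [Tq|->]; try (exfalso; apply: Hno; eexists; eassumption).
    by rewrite /= !subrr.
  - by move=> p Tp; left.
have : S (0, fun _ => 0) by right.
by rewrite hS => h; apply: Hno; eexists; exact: h.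
Qed.

Lemma coreL (R : realType) (X : normedModType R) (T : set (X * (X -> R))) :
  maximal_monotone T -> (exists M, forall x, dom T x -> `|x| <= M) ->
  forall z phi, is_dual phi -> forall eps, 0 < eps -> exists f, ran T f /\ phi z - eps < f z.
Proof.
move=> HT [M hM] z phi hphi eps heps.
have [[a fa] Ta] := T_nonempty HT.
move: HT => [Hop [Hmon Hmax]].
have hfa : is_dual fa := Hop _ Ta.
have [C1 [C10 hC1]] := dual_bound hfa (M + M).
have [C2 [C20 hC2]] := dual_bound hphi (M + M).
have hxa : forall x, dom T x -> `|x - a| <= M + M.
  move=> x hx; apply: (le_trans (ler_normB _ _)); apply: lerD; first exact: hM.
  by apply: hM; exists fa.
pose t := (C1 + C2 + 1) / eps.
have ht : 0 < t by rewrite /t divr_gt0 //; lra.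
have hte : t * eps = C1 + C2 + 1 by rewrite /t; field; rewrite gt_eqF.
pose y := a + t *: z.
pose S := T `|` [set (y, phi)].
case: (pselect (exists f, ran T f /\ phi z - eps < f z)) => // Hno; exfalso.
have claim : forall x f, T (x, f) -> 0 <= f x - f y - (phi x - phi y).
  move=> x f Txf; rewrite leNgt; apply/negP => hlt.
  have hf : is_dual f := Hop _ Txf.
  apply: Hno; exists f; split; first by exists x.
  rewrite ltNge; apply/negP => hA.
  have hm := Hmon _ _ Txf Ta; rewrite /= in hm.
  have hdx : dom T x by exists f.
  have h1 := hC1 _ (hxa _ hdx); rewrite (dualB hfa) in h1.
  have h2 := hC2 _ (hxa _ hdx); rewrite (dualB hphi) in h2.
  move: hlt; rewrite /y (dualD hf) (dualD hphi) (dualZ hf) (dualZ hphi) => hlt.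
  have h3 : t * f z <= t * (phi z - eps) by rewrite ler_wpM2l // ltW.
  move: h1 h2 => /ler_normlP [h1 h1'] /ler_normlP [h2 h2'].
  rewrite mulrBr hte in h3.
  lra.
have hS : monotone_op S.
  move=> p q [Tp|->] [Tq|->].
  - exact: Hmon.
  - by case: p Tp => x f Tp; exact: claim.
  - case: q Tq => x f Tq /=; have := claim _ _ Tq; lra.
  - by rewrite /= !subrr.
have : S = T.
  apply: Hmax => //.
  - move=> p [Tp|->]; [exact: Hop | exact: hphi].
  - by move=> p Tp; left.
move=> eST.
have : S (y, phi) by right.
rewrite eST => Typ; apply: Hno; exists phi; split; first by exists y.
lra.
Qed.

Lemma dual_ext (R : realType) (X : normedModType R) (f1 f2 : X -> R) :
  is_dual f1 -> (forall x, f1 x = f2 x) -> is_dual f2.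
Proof. by move=> h e; have -> : f2 = f1 by apply: funext => x; rewrite e. Qed.

Lemma dual_wsum (R : realType) (X : normedModType R) (s : seq (R * (X -> R))) :
  List.Forall (fun p => is_dual p.2) s -> is_dual (fun x => \sum_(p <- s) p.1 * p.2 x).
Proof.
elim: s => [|p s IH] H.
  by apply: (dual_ext (@zero_dual R X)) => x; rewrite big_nil.
inversion H; subst.
have hr := IH H3.
have hp : is_dual p.2 := H2.
apply: (@dual_ext _ _ (fun x => p.1 * p.2 x + \sum_(q <- s) q.1 * q.2 x)); last first.
  by move=> x; rewrite big_cons.
split.
  move=> c x y; rewrite (hp.1) (hr.1); ring.
move=> x; exact: (continuousD (continuousM (@cvg_cst R^o p.1 X (nbhs x) _) (hp.2 x)) (hr.2 x)).
Qed.

Lemma Forall_nth' (A : Type) (P : A -> Prop) (s : seq A) (x0 : A) :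
  List.Forall P s -> forall i, (i < size s)%N -> P (nth x0 s i).
Proof.
elim: s => [|a s IH] H [|i] //= hi; inversion H; subst => //.
exact: IH.
Qed.

Lemma sum_nth_ord (R : realType) (A : Type) (s : seq (R * A)) (x0 : R * A) (F : R * A -> R) :
  \sum_(i < size s) F (nth x0 s i) = \sum_(p <- s) F p.
Proof. by rewrite (big_nth x0) big_mkord. Qed.

Theorem corollary4p3 (R : realType) (X : completeNormedModType R)
  (T : set (X * (X -> R))) :
  maximal_monotone T -> bounded_set (dom T) -> weak_star_dense (conv_hull (ran T)).
Proof.
move=> HT hb g hg m xs eps heps.
have hM : exists M, forall x, dom T x -> `|x| <= M.
  move: hb => [M [Mreal]] /(_ (`|M| + 1)).
  rewrite (le_lt_trans (ler_norm _)) ?ltrDl// => /(_ erefl) aM.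
  by exists (`|M| + 1) => x hx; exact: aM.
have HT' := HT; move: HT' => [Hop [Hmon Hmax]].
have hran : forall f, ran T f -> is_dual f by move=> f [x Txf]; exact: (Hop _ Txf).
pose e (f : X -> R) (j : 'I_m) := f (xs j) - g (xs j).
have ne : exists f, ran T f.
  by have [[a fa] Ta] := T_nonempty HT; exists fa; exists a.
have H : forall v : 'I_m -> R, (forall f, ran T f -> \sum_j v j * e f j <= 0) ->
    forall f, ran T f -> \sum_j v j * e f j = 0.
  move=> v Hv f Sf.
  pose z := \sum_(j < m) v j *: xs j.
  have ez : forall f', ran T f' -> \sum_j v j * e f' j = f' z - g z.
    move=> f' Sf'; rewrite /z (dual_sum (hran _ Sf')) (dual_sum hg) -sumrB; apply: eq_bigr => j _; rewrite /e; ring.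
  rewrite ez //; apply/eqP; rewrite eq_le; apply/andP; split; first by rewrite -ez //; exact: Hv.
  rewrite leNgt; apply/negP => hlt.
  have hf := hran _ Sf.
  pose phi := fun x => g x + (g x - f x).
  have hphi : is_dual phi.
    split.
      move=> c x y; rewrite /phi (hg.1) (hf.1); ring.
    move=> x; exact: (continuousD (hg.2 x) (continuousB (hg.2 x) (hf.2 x))).
  have hd : 0 < g z - f z by lra.
  have [f' [Sf' hf']] := @coreL R X T HT hM z phi hphi (g z - f z) hd.
  have := Hv f' Sf'; rewrite ez // /phi in hf' *; lra.
have [s [Fs [s1 sj]]] := finB ne H.
pose x0 := ((0 : R), g).
pose h := fun x => \sum_(p <- s) p.1 * p.2 x.
have hdh : is_dual h.
  apply: dual_wsum.
  exact: (List.Forall_impl _ (fun p hp => hran _ (proj2 hp)) Fs).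
exists h; split; last split => //.
  exists (size s), (fun i => (nth x0 s i).1), (fun i => (nth x0 s i).2).
  split; first by move=> i; exact: (proj1 (Forall_nth' x0 Fs (ltn_ord i))).
  split; first by rewrite (sum_nth_ord s x0 (fun p => p.1)).
  split; first by move=> i; exact: (proj2 (Forall_nth' x0 Fs (ltn_ord i))).
  by apply: funext => x; rewrite /h -(sum_nth_ord s x0 (fun p => p.1 * p.2 x)).
move=> j.
have -> : h (xs j) - g (xs j) = 0.
  rewrite /h -[g (xs j)]mul1r -[X in X * _]s1 mulr_suml -sumrB -[RHS](sj j).
  by apply: eq_bigr => p _; rewrite /e; ring.
by rewrite normr0.
Qed.
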